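(* Let $X$ be a minimal dendric shift over $\mathcal{A}$ which is planar for $(\le^L,\le^R)$. (1) Every long enough left special factor $w$ of $X$ satisfies $E^L_X(w)=\{a,b\}$ where $a,b$ are consecutive for $\le^L$; moreover, for any two $\le^L$-consecutive letters $a,b$ and every $n\in\mathbb{N}$, there is a unique left special factor $w$ of length $n$ with $\{a,b\}\subseteq E^L_X(w)$. (2) Every long enough right special factor $w$ satisfies $E^R_X(w)=\{a,b\}$ where $a,b$ are consecutive for $\le^R$; moreover, for any two $\le^R$-consecutive letters $a,b$ and every $n\in\mathbb{N}$, there is a unique right special factor $w$ of length $n$ with $\{a,b\}\subseteq E^R_X(w)$.
   Context: A shift space over a finite alphabet $\mathcal{A}$ is a nonempty closed shift-invariant $X\subseteq\mathcal{A}^{\mathbb{Z}}$ with all letters in its language $\mathcal{L}(X)$; minimal if no nonempty proper closed shift-invariant subset. For $w\in\mathcal{L}(X)$: $E^L_X(w)=\{a:aw\in\mathcal{L}(X)\}$, $E^R_X(w)=\{b:wb\in\mathcal{L}(X)\}$, $E_X(w)=\{(a,b):awb\in\mathcal{L}(X)\}$; $w$ left (right) special if $|E^L_X(w)|\ge2$ ($|E^R_X(w)|\ge2$). $\mathcal{E}_X(w)$ is the bipartite graph on disjoint copies of $E^L_X(w),E^R_X(w)$ with edges $E_X(w)$; $X$ is dendric if each $\mathcal{E}_X(w)$ is a tree. For total orders $\le^L,\le^R$ on $\mathcal{A}$, $w$ is planar for $(\le^L,\le^R)$ if for all $(a_1,b_1),(a_2,b_2)\in E_X(w)$, $a_1<^La_2$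 implies $b_1\le^Rb_2$; $X$ is planar for $(\le^L,\le^R)$ if every word of $\mathcal{L}(X)$ is. *)

(* Defs.v *)
From mathcomp Require Import all_boot all_order all_algebra.
Set Implicit Arguments. Unset Strict Implicit. Unset Printing Implicit Defensive.
Import Order.TTheory GRing.Theory Num.Theory.
Local Open Scope ring_scope.

Section Shift.
Variable A : finType.

Definition config := int -> A.

Definition shift (x : config) : config := fun i => x (i + 1).

(* closed in the product topology of A^Z (A discrete): the basic
   neighbourhoods of x are the central cylinders [x_{-n..n}] *)
Definition closed_set (X : config -> Prop) : Prop :=
  forall x : config,
    (forall n : nat, exists y, X y /\ forall i : int, -(n%:Z) <= i <= n%:Z -> y i = x i) ->
    X x.

Definition shift_invariant (X : config -> Prop) : Prop :=
  forall x : config, X x <-> X (shift x).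

Definition window (x : config) (i : int) (m : nat) : seq A :=
  [seq x (i + k%:Z) | k <- iota 0 m].

Definition lang (X : config -> Prop) (w : seq A) : Prop :=
  exists x, X x /\ exists i : int, window x i (size w) = w.

Definition shift_space (X : config -> Prop) : Prop :=
  [/\ exists x, X x, closed_set X, shift_invariant X
    & forall a : A, lang X [:: a]].

Definition minimal_shift (X : config -> Prop) : Prop :=
  shift_space X /\
  forall Y : config -> Prop,
    (exists y, Y y) -> closed_set Y -> shift_invariant Y ->
    (forall y, Y y -> X y) -> forall x, X x -> Y x.

Definition EL (X : config -> Prop) (w : seq A) (a : A) : Prop := lang X (a :: w).
Definition ER (X : config -> Prop) (w : seq A) (b : A) : Prop := lang X (rcons w b).
Definition E2 (X : config -> Prop) (w : seq A) (a b : A) : Prop :=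
  lang X (a :: rcons w b).

Definition left_special (X : config -> Prop) (w : seq A) : Prop :=
  exists a b, a <> b /\ EL X w a /\ EL X w b.
Definition right_special (X : config -> Prop) (w : seq A) : Prop :=
  exists a b, a <> b /\ ER X w a /\ ER X w b.

(* the extension graph of w: vertices inl a (a in E^L(w)) and
   inr b (b in E^R(w)), edges {inl a, inr b} for (a,b) in E(w) *)
Definition ext_vertex (X : config -> Prop) (w : seq A) (v : A + A) : Prop :=
  match v with inl a => EL X w a | inr b => ER X w b end.

Definition ext_adj (X : config -> Prop) (w : seq A) (u v : A + A) : Prop :=
  match u, v with
  | inl a, inr b => E2 X w a b
  | inr b, inl a => E2 X w a b
  | _, _ => False
  end.

Definition g_connected (T : Type) (V : T -> Prop) (adj : T -> T -> Prop) : Prop :=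
  forall u v, V u -> V v ->
    exists p : seq T, last u p = v /\
      forall i : nat, (i < size p)%N -> adj (nth u (u :: p) i) (nth u p i).

Definition g_has_cycle (T : eqType) (adj : T -> T -> Prop) : Prop :=
  exists (v : T) (c : seq T),
    let s := v :: c in
    [/\ (3 <= size s)%N, uniq s &
      forall i : nat, (i < size s)%N -> adj (nth v s i) (nth v s (i.+1 %% size s))].

Definition g_tree (T : eqType) (V : T -> Prop) (adj : T -> T -> Prop) : Prop :=
  (exists v, V v) /\ g_connected V adj /\ ~ g_has_cycle adj.

Definition dendric (X : config -> Prop) : Prop :=
  forall w, lang X w -> g_tree (ext_vertex X w) (ext_adj X w).

Definition total_order (le : rel A) : Prop :=
  [/\ reflexive le, antisymmetric le, transitive le & total le].

Definition strict (le : rel A) (a b : A) : bool := le a b && (a != b).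

Definition consecutive (le : rel A) (a b : A) : Prop :=
  a <> b /\
  forall c, ~ (strict le a c && strict le c b) /\ ~ (strict le b c && strict le c a).

Definition planar_word (X : config -> Prop) (leL leR : rel A) (w : seq A) : Prop :=
  forall a1 b1 a2 b2, E2 X w a1 b1 -> E2 X w a2 b2 ->
    strict leL a1 a2 -> leR b1 b2.

Definition planar (X : config -> Prop) (leL leR : rel A) : Prop :=
  forall w, lang X w -> planar_word X leL leR w.

End Shift.

(* Main.v *)
Require Import Defs.
From mathcomp Require Import all_boot all_order all_algebra zify.
From Stdlib Require Import Classical IndefiniteDescription FunctionalExtensionality.
Set Implicit Arguments. Unset Strict Implicit. Unset Printing Implicit Defensive.
Import Order.TTheory GRing.Theory Num.Theory.

Section Basic.
Local Open Scope ring_scope.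
Variable A : finType.
Implicit Types (X : config A -> Prop) (y : config A) (w u v : seq A).

Lemma size_window y i m : size (window y i m) = m.
Proof. by rewrite /window size_map size_iota. Qed.

Lemma window_cat y i m n :
  window y i (m + n) = window y i m ++ window y (i + m%:Z) n.
Proof.
rewrite /window iotaD map_cat; congr (_ ++ _).
have -> : iota m n = iota (m + 0) n by rewrite addn0.
rewrite iotaDl -map_comp; apply: eq_map => k /=.
by rewrite PoszD addrA.
Qed.

Lemma window_rcons y i m : window y i m.+1 = rcons (window y i m) (y (i + m%:Z)).
Proof. by rewrite -addn1 window_cat cats1 /window /= addr0. Qed.

Lemma window_cons y i m : window y i m.+1 = y i :: window y (i + 1) m.
Proof. by rewrite -add1n window_cat /window /= addr0. Qed.

Lemma nth_window y i m k d : (k < m)%N -> nth d (window y i m) k = y (i + k%:Z).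
Proof. by move=> h; rewrite /window (nth_map 0%N) ?size_iota // nth_iota. Qed.

Lemma eq_window y y' i i' m :
  (forall k, (k < m)%N -> y (i + k%:Z) = y' (i' + k%:Z)) ->
  window y i m = window y' i' m.
Proof.
move=> h; apply: (@eq_from_nth _ (y i)); rewrite ?size_window // => k hk.
by rewrite !nth_window // h.
Qed.

Lemma lang_cat X u v : lang X (u ++ v) -> lang X u /\ lang X v.
Proof.
case=> y [Xy [i]]; rewrite size_cat window_cat => e.
have hs : size (window y i (size u)) = size u by rewrite size_window.
move/eqP: e; rewrite eqseq_cat // => /andP[/eqP e1 /eqP e2].
by split; exists y; split => //; [exists i | exists (i + (size u)%:Z)].
Qed.

Lemma lang_prefix X u e : lang X (rcons u e) -> lang X u.
Proof. by rewrite -cats1 => /lang_cat []. Qed.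

Lemma lang_suffix X u e : lang X (e :: u) -> lang X u.
Proof. by rewrite -cat1s => /lang_cat []. Qed.

Lemma lang_ext_r X w : lang X w -> exists e, lang X (rcons w e).
Proof.
case=> y [Xy [i e]]; exists (y (i + (size w)%:Z)); exists y; split => //.
by exists i; rewrite size_rcons window_rcons e.
Qed.

Lemma lang_ext_l X w : lang X w -> exists e, lang X (e :: w).
Proof.
case=> y [Xy [i e]]; exists (y (i - 1)); exists y; split => //.
by exists (i - 1); rewrite /= window_cons subrK e.
Qed.

Lemma lang_window X y i m : X y -> lang X (window y i m).
Proof. by move=> Xy; exists y; split => //; exists i; rewrite size_window. Qed.

End Basic.

Section Orders.
Variable A : finType.
Variable le : rel A.
Hypothesis tot : total_order le.

Lemma lo_refl a : le a a. Proof. by case: tot. Qed.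
Lemma lo_antisym a b : le a b -> le b a -> a = b.
Proof. by case: tot => _ h _ _ h1 h2; apply: h; rewrite h1 h2. Qed.
Lemma lo_trans a b c : le a b -> le b c -> le a c.
Proof. by case: tot => _ _ h _ h1 h2; apply: h h2. Qed.
Lemma lo_total a b : le a b \/ le b a.
Proof. by case: tot => _ _ _ h; case/orP: (h a b); [left|right]. Qed.

Lemma strictP a b : strict le a b <-> le a b /\ a <> b.
Proof. by rewrite /strict; split => [/andP[h /eqP]|[h /eqP]] //; rewrite h. Qed.

Lemma strict_or a b : a <> b -> strict le a b \/ strict le b a.
Proof.
move=> ne; case: (lo_total a b) => h; [left|right]; apply/strictP; split => //.
by move=> e; apply: ne.
Qed.

Lemma not_le_strict a b : ~ le a b -> strict le b a.
Proof.
move=> h; apply/strictP; case: (lo_total a b) => // h'; split => // e.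
by apply: h; rewrite e lo_refl.
Qed.

Lemma strict_le_trans a b c : strict le a b -> le b c -> strict le a c.
Proof.
move=> /strictP[h1 n1] h2; apply/strictP; split; first exact: lo_trans h1 h2.
by move=> e; subst c; apply: n1; apply: lo_antisym.
Qed.

Lemma le_strict_trans a b c : le a b -> strict le b c -> strict le a c.
Proof.
move=> h1 /strictP[h2 n2]; apply/strictP; split; first exact: lo_trans h1 h2.
by move=> e; subst c; apply: n2; apply: lo_antisym.
Qed.

Lemma strict_asym a b : strict le a b -> strict le b a -> False.
Proof. by move=> /strictP[h1 n] /strictP[h2 _]; apply: n; apply: lo_antisym. Qed.

Lemma strict_irr a : strict le a a -> False.
Proof. by move=> /strictP[_ ]. Qed.

Definition rank (x : A) : nat := #|[pred z | strict le z x]|.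

Lemma rank_lt a b : strict le a b -> (rank a < rank b)%N.
Proof.
move=> ab; apply: proper_card; apply/properP; split.
  apply/subsetP => z; rewrite !inE => za; exact: (@strict_le_trans z a b za (proj1 (proj1 (strictP _ _) ab))).
by exists a; rewrite !inE //; apply/negP => /strict_irr.
Qed.

Lemma min_exists (P : A -> Prop) x0 : P x0 -> exists m, P m /\ forall x, P x -> le m x.
Proof.
move: {2}(rank x0) (leqnn (rank x0)) => n; elim: n x0 => [|n IH] x0 hr Px0.
  exists x0; split => // x Px; case: (classic (le x0 x)) => // /not_le_strict h.
  by have := rank_lt h; rewrite ltnNge; move: hr; rewrite leqn0 => /eqP ->.
case: (classic (exists x, P x /\ strict le x x0)) => [[x [Px h]]|nh].
  apply: (IH x) => //; have := rank_lt h; move: hr; clear; lia.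
exists x0; split => // x Px; case: (classic (le x0 x)) => // /not_le_strict h.
by exfalso; apply: nh; exists x.
Qed.

End Orders.

Lemma path_closed (T : Type) (S : T -> Prop) (adj : T -> T -> Prop) (u v : T) (p : seq T) :
  (forall x x', S x -> adj x x' -> S x') -> S u -> last u p = v ->
  (forall i : nat, (i < size p)%N -> adj (nth u (u :: p) i) (nth u p i)) -> S v.
Proof.
move=> cl; elim: p u => [|x p IH] u Su /= lv h; first by rewrite -lv.
have Sx : S x by apply: (cl u) => //; exact: (h 0%N).
apply: (IH x) => // i hi; have := h i.+1 hi => /=.
by rewrite !(set_nth_default u x) //= ltnW.
Qed.

Section Tree.
Variable A : finType.
Variable X : config A -> Prop.
Variables leL leR : rel A.
Hypothesis totL : total_order leL.
Hypothesis totR : total_order leR.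
Hypothesis dend : dendric X.
Hypothesis plan : planar X leL leR.
Hypothesis letters : forall a : A, lang X [:: a].

Lemma E2_EL w a b : E2 X w a b -> EL X w a.
Proof. by rewrite /E2 -rcons_cons => /lang_prefix. Qed.
Lemma E2_lang w a b : E2 X w a b -> lang X w.
Proof. by move/E2_EL; apply: lang_suffix. Qed.
Lemma EL_lang w a : EL X w a -> lang X w.
Proof. exact: lang_suffix. Qed.

Lemma pl w a1 b1 a2 b2 : E2 X w a1 b1 -> E2 X w a2 b2 -> strict leL a1 a2 -> leR b1 b2.
Proof. by move=> h1 h2; apply: (plan (E2_lang h1)). Qed.

Lemma no_square w a a' b b' : a <> a' -> b <> b' ->
  E2 X w a b -> E2 X w a b' -> E2 X w a' b -> E2 X w a' b' -> False.
Proof.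
move=> na nb h1 h2 h3 h4.
have [_ [_ nc]] := dend (E2_lang h1); apply: nc.
exists (inl a), [:: inr b; inl a'; inr b']; split => //.
  have n1 : (inl a != inl a' :> A + A) by apply/eqP => [[]].
  have n2 : (inr b != inr b' :> A + A) by apply/eqP => [[]].
  by rewrite /= !inE !negb_or /= n1 n2.
by case=> [|[|[|[|i]]]].
Qed.

Lemma shared w a a' : strict leL a a' -> EL X w a -> EL X w a' ->
  (forall d, EL X w d -> strict leL a d -> strict leL d a' -> False) ->
  exists b, E2 X w a b /\ E2 X w a' b.
Proof.
move=> aa' ha ha' nd; apply: NNPP => NN.
have lw := EL_lang ha.
have [_ [conn _]] := dend lw.
have [x hx] := lang_ext_r ha.
have [y hy] := lang_ext_r ha'.
pose S (v : A + A) : Prop := match v with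
  | inl e => leL e a | inr b => exists e, leL e a /\ E2 X w e b end.
have [p [lp hp]] := conn (inl a) (inl a') ha ha'.
have : S (inl a') .
  apply: (path_closed _ (u := inl a) _ lp hp); last by rewrite /= (lo_refl totL).
  move=> [e|b] [e'|b'] //=.
    by move=> h1 h2; exists e.
  move=> [e0 [h0 E0]] E1; case: (classic (leL e' a)) => // /(not_le_strict totL) ae'.
  have hle' : leL a' e'.
    case: (lo_total totL a' e') => // h; case: (classic (e' = a')) => [->|ne].
      exact: (lo_refl totL).
    by exfalso; apply: (nd e' (E2_EL E1) ae'); apply/strictP.
  have Ea : E2 X w a b.
    case: (classic (e0 = a)) => [<-//|ne0].
    have s0 : strict leL e0 a by apply/strictP; split.
    have := lo_antisym totR (pl E0 hx s0) (pl hx E1 ae'); move=> ->; exact: hx.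
  have Ea' : E2 X w a' b.
    case: (classic (e' = a')) => [<-//|ne'].
    have s1 : strict leL a' e' by apply/strictP; split => // eq; apply: ne'.
    have s2 : strict leL e0 a' := le_strict_trans totL h0 aa'.
    have := lo_antisym totR (pl E0 hy s2) (pl hy E1 s1); move=> ->; exact: hy.
  by exfalso; apply: NN; exists b.
by move=> /= h; apply: (strict_asym totL aa'); apply/strictP; split => // e; subst; apply: (strict_irr aa').
Qed.

Lemma interval_EL w c c' d : lang X w -> EL X w c -> EL X w c' ->
  strict leL c d -> strict leL d c' -> EL X w d.
Proof.
elim/last_ind: w => [|v e IH] lw hc hc' s1 s2; first exact: letters.
have hv : lang X v by apply: lang_prefix lw.
have hcv : EL X v c by move: hc; rewrite /EL -rcons_cons => /lang_prefix.
have hcv' : EL X v c' by move: hc'; rewrite /EL -rcons_cons => /lang_prefix.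
have [y hy] := lang_ext_r (IH hv hcv hcv' s1 s2).
have := lo_antisym totR (pl hc hy s1) (pl hy hc' s2); move=> ->; exact: hy.
Qed.

End Tree.

Section Uniq.
Variable A : finType.
Variable X : config A -> Prop.
Variables leL leR : rel A.
Hypothesis totL : total_order leL.
Hypothesis totR : total_order leR.
Hypothesis dend : dendric X.
Hypothesis plan : planar X leL leR.
Hypothesis letters : forall a : A, lang X [:: a].

Definition gapw (a b : A) (n : nat) (w : seq A) :=
  size w = n /\ lang X w /\ EL X w a /\ EL X w b.

Lemma EL_prefix w e a : EL X (rcons w e) a -> EL X w a.
Proof. by rewrite /EL -rcons_cons => /lang_prefix. Qed.

Lemma gap_unique_strict a b : strict leL a b ->
  (forall c, ~ (strict leL a c && strict leL c b)) ->
  forall n, exists w, gapw a b n w /\ forall w', gapw a b n w' -> w' = w.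
Proof.
move=> ab nd; elim=> [|n [w [[sw [lw [ha hb]]] uw]]].
  exists [::]; split; first by split=> //; split; [exact: (lang_suffix (letters a))|split; exact: letters].
  by move=> w' [/size0nil -> _].
have [x [hx1 hx2]] := shared totL totR dend plan ab ha hb
   (fun d _ h1 h2 => nd d (introT andP (conj h1 h2))).
exists (rcons w x); split.
  split; first by rewrite size_rcons sw.
  by split; [exact: (lang_suffix hx1)|split].
move=> w' [sw' [lw' [ha' hb']]].
case/lastP: w' sw' lw' ha' hb' => [//|v e] sv lv hav hbv.
have ev : v = w.
  apply: uw; split; first by move: sv; rewrite size_rcons => -[].
  by split; [exact: lang_prefix lv|split; apply: EL_prefix; eassumption].
subst v; congr rcons; apply: NNPP => ne.
have nab : a <> b by move=> e0; subst; apply: (strict_irr ab).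
exact: (no_square dend nab ne hav hx1 hbv hx2).
Qed.


Lemma gap_unique a b : consecutive leL a b ->
  forall n, exists w, gapw a b n w /\ forall w', gapw a b n w' -> w' = w.
Proof.
move=> [ne h]; case: (strict_or totL ne) => s.
  by apply: gap_unique_strict => // c; case: (h c).
move=> n; have [w [[h1 [h2 [h3 h4]]] hu]] :=
  gap_unique_strict s (fun c => proj2 (h c)) n.
exists w; split; first by do !split.
by move=> w' [g1 [g2 [g3 g4]]]; apply: hu; do !split.
Qed.

Lemma gap_word a b : consecutive leL a b ->
  exists u : nat -> A, forall n, gapw a b n (mkseq u n) /\
     forall w, gapw a b n w -> w = mkseq u n.
Proof.
move=> c; pose U n := proj1_sig (constructive_indefinite_description _ (gap_unique c n)).
have HU n : gapw a b n (U n) /\ forall w, gapw a b n w -> w = U n.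
  exact: (proj2_sig (constructive_indefinite_description _ (gap_unique c n))).
exists (fun n => nth a (U n.+1) n).
suff E : forall n, U n = mkseq (fun n => nth a (U n.+1) n) n.
  by move=> n; rewrite -E.
elim=> [|n IH].
  by have [[/size0nil -> _] _] := HU 0%N.
have [[s1 [l1 [a1 b1]]] _] := HU n.+1.
rewrite mkseqS -IH.
move: s1 l1 a1 b1; case/lastP: (U n.+1) => [//|v e] s1 l1 a1 b1.
have -> : v = U n.
  apply: (proj2 (HU n)); split; first by move: s1; rewrite size_rcons => -[].
  by split; [exact: lang_prefix l1|split; apply: EL_prefix; eassumption].
congr rcons.
by rewrite nth_rcons (proj1 (proj1 (HU n))) ltnn eqxx.
Qed.
End Uniq.

Definition infP (P : nat -> Prop) := forall N, exists n, (N <= n)%N /\ P n.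

Lemma inf_true : infP (fun _ => True).
Proof. by move=> N; exists N. Qed.

Lemma pigeon (B : finType) (f : nat -> B) (P : nat -> Prop) :
  infP P -> exists c, infP (fun n => P n /\ f n = c).
Proof.
move=> iP; apply: NNPP => nh.
have H c : exists N, forall n, (N <= n)%N -> ~ (P n /\ f n = c).
  have : ~ infP (fun n => P n /\ f n = c) by move=> h; apply: nh; exists c.
  move/not_all_ex_not => [N hN]; exists N => n hn hp; apply: hN; by exists n.
have : forall l : seq B, exists N, forall c, c \in l -> forall n, (N <= n)%N -> ~ (P n /\ f n = c).
  elim=> [|c l [N hN]]; first by exists 0%N.
  have [M hM] := H c; exists (maxn N M) => c'; rewrite inE => /orP[/eqP ->|hc] n hn.
    by apply: hM; move: hn; clear; lia.
  by apply: hN => //; move: hn; clear; lia.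
move=> /(_ (enum B)) [N hN]; have [n [hn Pn]] := iP N.
have hm : f n \in enum B by rewrite enumT mem_index_enum.
exact: (hN (f n) hm n hn (conj Pn erefl)).
Qed.

Section Compact.
Local Open Scope ring_scope.
Variable A : finType.
Variable y : nat -> config A.

Definition pair_at (m n : nat) : A * A := (y n (- (m%:Z)), y n (m%:Z)).

Fixpoint Sq (m : nat) : {P : nat -> Prop | infP P} :=
  match m with
  | 0%N => exist _ (fun _ => True) inf_true
  | m'.+1 => let e := constructive_indefinite_description _
                 (pigeon (pair_at m') (proj2_sig (Sq m'))) in
      exist _ (fun n => proj1_sig (Sq m') n /\ pair_at m' n = proj1_sig e) (proj2_sig e)
  end.

Definition cv (m : nat) := proj1_sig (constructive_indefinite_description _
                 (pigeon (pair_at m) (proj2_sig (Sq m)))).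

Lemma Sq_S m n : proj1_sig (Sq m.+1) n -> proj1_sig (Sq m) n /\ pair_at m n = cv m.
Proof. by []. Qed.

Lemma Sq_mono m k n : (k <= m)%N -> proj1_sig (Sq m) n -> proj1_sig (Sq k) n.
Proof.
elim: m => [|m IH] hk h; first by move: hk; rewrite leqn0 => /eqP ->.
case: (ltngtP k m.+1) hk => // [hk' _|-> _ //].
by apply: IH => //; case/Sq_S: h.
Qed.

Definition zlim (i : int) : A := if 0 <= i then (cv `|i|%N).2 else (cv `|i|%N).1.

Lemma Sq_agree m n : proj1_sig (Sq m.+1) n ->
  forall i : int, - (m%:Z) <= i <= m%:Z -> y n i = zlim i.
Proof.
move=> h i hi.
have hk : (`|i|.+1 <= m.+1)%N by move: hi; clear; move=> /andP[? ?]; lia.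
have [_ e] := Sq_S (Sq_mono hk h).
rewrite /zlim -e /pair_at /=; case: ifP => hpos /=.
  by congr y; move: hpos; clear; lia.
by congr y; move: hpos; clear; lia.
Qed.

Lemma compact : exists z : config A, forall m : nat, exists n, (m <= n)%N /\
  forall i : int, - (m%:Z) <= i <= m%:Z -> y n i = z i.
Proof.
exists zlim => m; have [n [hn h]] := proj2_sig (Sq m.+1) m.
by exists n; split => //; apply: Sq_agree.
Qed.

End Compact.

Section Minimal.
Local Open Scope ring_scope.
Variable A : finType.
Variable X : config A -> Prop.
Hypothesis minX : minimal_shift X.

Lemma sh_space : shift_space X. Proof. by case: minX. Qed.
Lemma X_closed : closed_set X. Proof. by case: sh_space. Qed.
Lemma X_inv : shift_invariant X. Proof. by case: sh_space. Qed.
Lemma X_letters a : lang X [:: a]. Proof. by case: sh_space. Qed.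

Lemma shift_nat y (n : nat) : X y -> X (fun i => y (i + n%:Z)).
Proof.
move=> Xy; elim: n => [|n IH].
  by have -> : (fun i => y (i + 0%:Z)) = y by apply: functional_extensionality => i; rewrite addr0.
have -> : (fun i => y (i + n.+1%:Z)) = shift (fun i => y (i + n%:Z)).
  by apply: functional_extensionality => i; rewrite /shift; congr y; lia.
by apply: (proj1 (X_inv _)).
Qed.

Lemma shift_negnat y (n : nat) : X y -> X (fun i => y (i - n%:Z)).
Proof.
move=> Xy; elim: n => [|n IH].
  by have -> : (fun i => y (i - 0%:Z)) = y by apply: functional_extensionality => i; rewrite subr0.
apply: (proj2 (X_inv _)).
have -> : shift (fun i => y (i - n.+1%:Z)) = (fun i => y (i - n%:Z)) => //.
by apply: functional_extensionality => i; rewrite /shift; congr y; lia.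
Qed.

Lemma shift_int y (t : int) : X y -> X (fun i => y (i + t)).
Proof.
case: t => n Xy; first exact: shift_nat.
have := shift_negnat n.+1 Xy.
have -> : (fun i => y (i - n.+1%:Z)) = (fun i => y (i + Negz n)) => //.
Qed.

Lemma contains_all w y : X y -> lang X w -> exists i, window y i (size w) = w.
Proof.
move=> Xy lw; apply: NNPP => nocc.
pose Y := fun z => X z /\ forall i, window z i (size w) <> w.
have YX : forall z, Y z -> X z by move=> z [].
have Ycl : closed_set Y.
  move=> x hx; split.
    by apply: X_closed => n; have [z [[Xz _] h]] := hx n; exists z.
  move=> i e; have [z [[_ hz] h]] := hx (`|i| + size w)%N.
  apply: (hz i); rewrite -[in RHS]e; apply: eq_window => k hk; apply: h.
  move: hk; clear; lia.
have Yinv : shift_invariant Y.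
  move=> x; split => [[Xx hx]|[Xx hx]].
    split; first by apply: (proj1 (X_inv _)).
    move=> i e; apply: (hx (i + 1)); rewrite -[in RHS]e; apply: eq_window => k _.
    by rewrite /shift; congr x; lia.
  split; first by apply: (proj2 (X_inv _)).
  move=> i e; apply: (hx (i - 1)); rewrite -[in RHS]e; apply: eq_window => k _.
  by rewrite /shift; congr x; lia.
have Yy : Y y by split => // i e; apply: nocc; exists i.
have [_ mn] := minX.
have [x [Xx [i e]]] := lw.
by have [_ ] := mn Y (ex_intro _ y Yy) Ycl Yinv YX x Xx; apply; exact: e.
Qed.

Lemma unif_rec b : exists L : nat, forall y, X y -> exists i : int,
  - (L%:Z) <= i <= L%:Z /\ y i = b.
Proof.
apply: NNPP => nh.
have H L : exists y, X y /\ forall i : int, - (L%:Z) <= i <= L%:Z -> y i <> b.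
  apply: NNPP => h; apply: nh; exists L => y Xy; apply: NNPP => h2; apply: h.
  by exists y; split => // i hi e; apply: h2; exists i.
pose ys L := proj1_sig (constructive_indefinite_description _ (H L)).
have hys L : X (ys L) /\ forall i : int, - (L%:Z) <= i <= L%:Z -> ys L i <> b.
  exact: (proj2_sig (constructive_indefinite_description _ (H L))).
have [z hz] := compact ys.
have Xz : X z.
  apply: X_closed => n; have [k [hk h]] := hz n; exists (ys k); split => //.
  by case: (hys k).
have [i e] := contains_all Xz (X_letters b).
move: e => /= [e]; rewrite addr0 in e.
have [k [hk h]] := hz `|i|%N.
apply: (proj2 (hys k) i); first by move: hk; clear; lia.
by rewrite h // ; clear; lia.
Qed.

End Minimal.

Section Core.
Local Open Scope ring_scope.
Variable A : finType.
Variable X : config A -> Prop.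
Hypothesis minX : minimal_shift X.
Variables a b : A.
Hypothesis ab : a <> b.
Variable u : nat -> A.
Hypothesis H1 : forall n, lang X (a :: mkseq u n).
Hypothesis H3 : forall n e, lang X (b :: rcons (mkseq u n) e) -> e = u n.

Lemma tail y j : X y -> y j = b -> forall k : nat, y (j + 1 + k%:Z) = u k.
Proof.
move=> Xy yj k; elim: k {-2}k (leqnn k) => [|n IH] k hk.
  move: hk; rewrite leqn0 => /eqP ->.
  have := lang_window (j) 2 Xy; rewrite window_cons window_rcons.
  rewrite /window /= yj => h; have := @H3 0%N _ h => <-; congr y; lia.
case: (ltngtP k n.+1) hk => // [hk _|-> _]; first by apply: IH.
have := lang_window j (n.+3) Xy; rewrite window_cons window_rcons yj.
have -> : window y (j + 1) n.+1 = mkseq u n.+1.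
  apply: (@eq_from_nth _ a); rewrite ?size_window ?size_mkseq // => k' hk'.
  by rewrite nth_window // nth_mkseq // IH.
by move=> h; have := @H3 n.+1 _ h => <-; congr y; lia.
Qed.

Lemma core : False.
Proof.
have [x0 [Xx0 [i0 e0]]] := X_letters minX b.
have xb : x0 i0 = b by move: e0 => /= [e]; rewrite addr0 in e.
have [L hL] := unif_rec minX b.
have [i [hi e1]] := hL _ (@shift_int _ _ minX _ (i0 + L%:Z + 1) Xx0).
set p : nat := absz (i + L%:Z + 1).
have hp : (0 < p)%N by rewrite /p; move: hi; clear; move=> /andP[? ?]; lia.
have hj1 : x0 (i0 + p%:Z) = b by rewrite -e1; congr x0; rewrite /p; move: hi; clear; move=> /andP[? ?]; lia.
have uper : forall k, u (k + p)%N = u k.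
  move=> k; rewrite -(tail Xx0 xb) -(tail Xx0 hj1); congr x0; lia.
have ub : u p.-1 = b.
  by rewrite -(tail Xx0 xb) -hj1; congr x0; move: hp; clear; lia.
pose ys (n : nat) := fun t : int => x0 (t + (i0 + 1 + (n * p)%N%:Z)).
have [z hz] := compact ys.
have Xz : X z.
  apply: (X_closed minX) => n; have [k [hk h]] := hz n; exists (ys k); split => //.
  exact: (@shift_int _ _ minX _ _ Xx0).
have zper : forall t, z (t + p%:Z) = z t.
  move=> t; have [n [hn h]] := hz (`|t| + p)%N.
  have np : (n <= n * p)%N by rewrite leq_pmulr.
  rewrite -!h; try (move: hn; clear; lia).
  rewrite /ys.
  have -> : t + p%:Z + (i0 + 1 + (n * p)%N%:Z) = i0 + 1 + (absz (t + (n * p)%N%:Z)%R + p)%N%:Z.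
    by move: hn np; clear; lia.
  have -> : t + (i0 + 1 + (n * p)%N%:Z) = i0 + 1 + (absz (t + (n * p)%N%:Z)%R)%N%:Z.
    by move: hn np; clear; lia.
  by rewrite !(tail Xx0 xb) uper.
pose Y := fun y => X y /\ forall t, y (t + p%:Z) = y t.
have Ycl : closed_set Y.
  move=> x hx; split.
    by apply: (X_closed minX) => n; have [y [[Xy _] h]] := hx n; exists y.
  move=> t; have [y [[_ hy] h]] := hx (`|t| + p)%N.
  rewrite -(h t) -?(h (t + p%:Z)) ?hy //; clear; lia.
have Yinv : shift_invariant Y.
  move=> x1; split => [[Xx hx]|[Xx hx]].
    split; first by apply: (proj1 (X_inv minX _)).
    by move=> t; rewrite /shift -addrA (addrC p%:Z) addrA hx.
  split; first by apply: (proj2 (X_inv minX _)).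
  move=> t; have := hx (t - 1); rewrite /shift.
  have e2 : t - 1 + p%:Z + 1 = t + p%:Z by lia.
  by rewrite e2 subrK.
have [_ mn] := minX.
have [y [Xy [s es]]] := H1 p.
have [_ yper] := mn Y (ex_intro _ z (conj Xz zper)) Ycl Yinv (fun y hy => proj1 hy) y Xy.
have hs : size (a :: mkseq u p) = p.+1 by rewrite /= size_mkseq.
rewrite hs in es.
have ya : y s = a.
  by have := congr1 (nth a ^~ 0%N) es; rewrite nth_window //= addr0.
have yb : y (s + p%:Z) = b.
  have := congr1 (nth a ^~ p) es; rewrite nth_window //= => ->.
  by rewrite -ub; case: (p) hp => //= p' _; rewrite nth_mkseq.
by apply: ab; rewrite -ya -yb yper.
Qed.
End Core.

Lemma fin_bound (T : finType) (B : Type) (R' : T -> B -> Prop) (sz : B -> nat) :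
  (forall t, exists N, forall w, (N <= sz w)%N -> R' t w) ->
  exists N, forall t w, (N <= sz w)%N -> R' t w.
Proof.
move=> H.
have : forall l : seq T, exists N, forall t, t \in l -> forall w, (N <= sz w)%N -> R' t w.
  elim=> [|t l [N hN]]; first by exists 0%N.
  have [M hM] := H t; exists (maxn N M) => t'; rewrite inE => /orP[/eqP ->|ht] w hw.
    by apply: hM; move: hw; clear; lia.
  by apply: hN => //; move: hw; clear; lia.
move=> /(_ (enum T)) [N hN]; exists N => t w hw; apply: (hN t) => //.
by rewrite enumT mem_index_enum.
Qed.

Section Left.
Variable A : finType.
Variable X : config A -> Prop.
Variables leL leR : rel A.
Hypothesis totL : total_order leL.
Hypothesis totR : total_order leR.
Hypothesis minX : minimal_shift X.
Hypothesis dend : dendric X.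
Hypothesis plan : planar X leL leR.

Let letters := X_letters minX.

Lemma lang_take w n : lang X w -> lang X (take n w).
Proof. by rewrite -{1}(cat_take_drop n w) => /lang_cat []. Qed.

Lemma EL_take w n x : EL X w x -> EL X (take n w) x.
Proof. by rewrite /EL -{1}(cat_take_drop n w) -cat_cons => /lang_cat []. Qed.

Lemma triple a b c : consecutive leL a b -> strict leL a b -> strict leL b c ->
  exists N, forall w, (N <= size w)%N -> lang X w -> ~ (EL X w a /\ EL X w b /\ EL X w c).
Proof.
move=> cab sab sbc; apply: NNPP => nh.
have H n : exists w, (n <= size w)%N /\ lang X w /\ EL X w a /\ EL X w b /\ EL X w c.
  apply: NNPP => h; apply: nh; exists n => w hw lw h3; apply: h; exists w; tauto.
have [u hu] := gap_word totL totR dend plan letters cab.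
have Hc n : EL X (mkseq u n) c.
  have [w [hw [lw [ha [hb hc]]]]] := H n.
  have -> : mkseq u n = take n w.
    apply/esym/(proj2 (hu n)); split; first by rewrite size_take_min; apply/minn_idPl.
    by split; [exact: lang_take|split; exact: EL_take].
  exact: EL_take.
have E2x n x : EL X (mkseq u n.+1) x -> E2 X (mkseq u n) x (u n).
  by rewrite mkseqS.
have Ha n : E2 X (mkseq u n) a (u n) by apply: E2x; have [[_ [_ [h _]]] _] := hu n.+1.
have H3 n e : lang X (b :: rcons (mkseq u n) e) -> e = u n.
  move=> hbe.
  have e1 := pl plan (Ha n) hbe sab.
  have e2 := pl plan hbe (E2x _ _ (Hc n.+1)) sbc.
  exact: (lo_antisym totR e2 e1).
have nab : a <> b by move=> e; subst; apply: (strict_irr sab).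
apply: (core minX nab (u := u)) => // n.
by have [[_ [_ [h _]]] _] := hu n.
Qed.


Lemma part1 :
  ((exists N : nat, forall w : seq A, lang X w -> left_special X w -> (N <= size w)%N ->
      exists a b, consecutive leL a b /\ (forall c, EL X w c <-> c = a \/ c = b))
   /\
   (forall a b : A, consecutive leL a b -> forall n : nat,
      exists w : seq A,
        (size w = n /\ lang X w /\ left_special X w /\ EL X w a /\ EL X w b) /\
        forall w' : seq A,
          size w' = n /\ lang X w' /\ left_special X w' /\ EL X w' a /\ EL X w' b ->
          w' = w)).
Proof.
split.
  have [N hN] : exists N, forall (t : (A * A * A)%type) w, (N <= size w)%N ->
     consecutive leL t.1.1 t.1.2 -> strict leL t.1.1 t.1.2 -> strict leL t.1.2 t.2 ->
       lang X w -> ~ (EL X w t.1.1 /\ EL X w t.1.2 /\ EL X w t.2).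
    apply: (fin_bound (sz := size)) => -[[a b] c] /=.
    case: (classic (consecutive leL a b /\ strict leL a b /\ strict leL b c)) => [[h1 [h2 h3]]|nh].
      by have [N hN] := triple h1 h2 h3; exists N => w hw _ _ _ lw; exact: hN.
    by exists 0%N => w _ h1 h2 h3; exfalso; apply: nh.
  exists N => w lw [x [y [nxy [hx hy]]]] hw.
  have [m [hm mmin]] := min_exists totL hx.
  have [d [[hd ndm] dmin]] : exists d, (EL X w d /\ d <> m) /\
      forall z, EL X w z /\ z <> m -> leL d z.
    have [z0 hz0] : exists z0, EL X w z0 /\ z0 <> m.
      case: (classic (x = m)) => [exm|nxm]; last by exists x.
      by exists y; split => // eym; apply: nxy; rewrite exm eym.
    exact: (min_exists totL hz0).
  have smd : strict leL m d by apply/strictP; split; [exact: mmin|move=> e; apply: ndm].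
  have cmd : consecutive leL m d.
    split; first by move=> e; apply: ndm.
    move=> c; split => /andP[h1 h2].
      have hc := interval_EL totR plan letters lw hm hd h1 h2.
      have ldc : leL d c by apply: dmin; split => // e; subst; apply: (strict_irr h1).
      by apply: (strict_irr (strict_le_trans totL h2 ldc)).
    have := strict_le_trans totL (strict_le_trans totL h1 (proj1 (proj1 (strictP _ _ _) h2))) (mmin d hd).
    exact: strict_irr.
  exists m, d; split => // c; split; last by case=> ->.
  move=> hc; apply: NNPP => nc.
  have ldc : leL d c by apply: dmin; split => // e; apply: nc; left.
  have sdc : strict leL d c by apply/strictP; split => // e; apply: nc; right.
  exact: (hN (m, d, c) w hw cmd smd sdc lw (conj hm (conj hd hc))).
move=> a b cab n.
have [w [[sw [lw [ha hb]]] hu]] := gap_unique totL totR dend plan letters cab n.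
have nab : a <> b by case: cab.
exists w; split; first by do !split => //; exists a, b.
by move=> w' [s1 [l1 [_ [a1 b1]]]]; apply: hu.
Qed.
End Left.

Lemma tree_transfer (T : eqType) (V V' : T -> Prop) (adj adj' : T -> T -> Prop) (f : T -> T) :
  (forall v, f (f v) = v) -> (forall v, V' v <-> V (f v)) ->
  (forall u v, adj' u v <-> adj (f u) (f v)) -> g_tree V adj -> g_tree V' adj'.
Proof.
move=> ff hV hadj [[v0 hv0] [conn nc]]; split.
  by exists (f v0); apply/hV; rewrite ff.
have finj : injective f by apply: (can_inj ff).
split.
  move=> u v /hV hu /hV hv; have [p [lp hp]] := conn _ _ hu hv.
  exists (map f p); split.
    by rewrite -{1}(ff u) last_map lp ff.
  move=> i; rewrite size_map => hi; apply/hadj.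
  have -> : u :: map f p = map f (f u :: p) by rewrite /= ff.
  rewrite -{2}(ff u) !(nth_map (f u)) ?ff //=; first exact: hp.
  exact: ltnW.
move=> [v [c [h1 h2 h3]]]; apply: nc; exists (f v), (map f c); split.
- by rewrite /= size_map.
- by rewrite -map_cons map_inj_uniq.
move=> i; rewrite /= size_map => hi.
have hi' : (i.+1 %% (size c).+1 < (size c).+1)%N by rewrite ltn_mod.
have := h3 i hi; move/hadj.
by rewrite -map_cons !(nth_map v) //.
Qed.

Section Rev.
Local Open Scope ring_scope.
Variable A : finType.

Definition rc (x : config A) : config A := fun i => x (- i).

Lemma rcK x : rc (rc x) = x.
Proof. by apply: functional_extensionality => i; rewrite /rc opprK. Qed.

Lemma window_rc y i m : window (rc y) i m = rev (window y (- (i + m%:Z - 1)) m).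
Proof.
apply: (@eq_from_nth _ (y 0)); rewrite ?size_rev ?size_window // => k hk.
rewrite nth_rev ?size_window // !nth_window //; last by move: hk; clear; lia.
by rewrite /rc; congr y; move: hk; clear; lia.
Qed.

Variable X : config A -> Prop.
Definition Xr := fun y => X (rc y).

Lemma lang_rev w : lang Xr w <-> lang X (rev w).
Proof.
split.
  case=> y [Xy [i e]]; exists (rc y); split => //.
  exists (- (i + (size w)%:Z - 1)); rewrite size_rev.
  have e' := e; rewrite -{1}(rcK y) window_rc in e'.
  by rewrite -[in RHS]e' revK.
case=> x [Xx [j e]]; exists (rc x); split; first by rewrite /Xr rcK.
exists (- j - (size w)%:Z + 1); rewrite window_rc.
have -> : - (- j - (size w)%:Z + 1 + (size w)%:Z - 1) = j by lia.
by rewrite -size_rev e revK.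
Qed.

Lemma EL_rev w a : EL Xr w a <-> ER X (rev w) a.
Proof. by rewrite /EL /ER lang_rev rev_cons. Qed.
Lemma ER_rev w a : ER Xr w a <-> EL X (rev w) a.
Proof. by rewrite /EL /ER lang_rev rev_rcons. Qed.
Lemma E2_rev w a b : E2 Xr w a b <-> E2 X (rev w) b a.
Proof. by rewrite /E2 lang_rev rev_cons rev_rcons. Qed.

Lemma ls_rev w : left_special Xr w <-> right_special X (rev w).
Proof.
split=> [[a [b [h [h1 h2]]]]|[a [b [h [h1 h2]]]]]; exists a, b; split => //;
  by split; apply/EL_rev.
Qed.


Lemma closed_rc (Y : config A -> Prop) : closed_set Y -> closed_set (fun x => Y (rc x)).
Proof.
move=> cY x hx; apply: cY => n; have [y [Yy h]] := hx n; exists (rc y); split => //.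
by move=> i hi; rewrite /rc h //; move: hi; clear; lia.
Qed.

Lemma rc_shift x : shift (rc (shift x)) = rc x.
Proof. by apply: functional_extensionality => i; rewrite /shift /rc; congr x; lia. Qed.

Lemma inv_rc (Y : config A -> Prop) : shift_invariant Y -> shift_invariant (fun x => Y (rc x)).
Proof. by move=> iY x /=; rewrite -(rc_shift x) -iY. Qed.

Lemma minimal_rev : minimal_shift X -> minimal_shift Xr.
Proof.
move=> [[[x0 X0] cl inv lt] mn]; split.
  split.
  - by exists (rc x0); rewrite /Xr rcK.
  - exact: closed_rc.
  - exact: inv_rc.
  - by move=> a; apply/lang_rev; exact: lt.
move=> Y [y0 Y0] cY iY YX y Xy.
have e1 : (fun x => Y (rc x)) (rc y0) by rewrite /= rcK.
have e2 : forall x, (fun x => Y (rc x)) x -> X x by move=> x /YX; rewrite /Xr rcK.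
have := mn (fun x => Y (rc x)) (ex_intro _ (rc y0) e1) (closed_rc cY) (inv_rc iY) e2 (rc y) Xy.
by rewrite /= rcK.
Qed.

Definition swp (v : A + A) : A + A := match v with inl a => inr a | inr b => inl b end.

Lemma dendric_rev : dendric X -> dendric Xr.
Proof.
move=> dX w /lang_rev lw; apply: (tree_transfer (f := swp) _ _ _ (dX _ lw)).
- by case.
- by case=> a /=; [apply: EL_rev | apply: ER_rev].
- by case=> a [] b /=; try apply: E2_rev.
Qed.

Lemma planar_rev leL leR : total_order leL -> total_order leR ->
  planar X leL leR -> planar Xr leR leL.
Proof.
move=> tL tR pX w lw a1 b1 a2 b2 /E2_rev h1 /E2_rev h2 s.
apply: NNPP => /(not_le_strict tL) s'.
have := pl pX h2 h1 s'; move: s => /strictP [l n] l'.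
by apply: n; apply: (lo_antisym tR).
Qed.

End Rev.

Theorem mainTheorem17 (A : finType) (X : config A -> Prop) (leL leR : rel A) :
  total_order leL -> total_order leR ->
  minimal_shift X -> dendric X -> planar X leL leR ->
  (* (1) *)
  ((exists N : nat, forall w : seq A, lang X w -> left_special X w -> (N <= size w)%N ->
      exists a b, consecutive leL a b /\ (forall c, EL X w c <-> c = a \/ c = b))
   /\
   (forall a b : A, consecutive leL a b -> forall n : nat,
      exists w : seq A,
        (size w = n /\ lang X w /\ left_special X w /\ EL X w a /\ EL X w b) /\
        forall w' : seq A,
          size w' = n /\ lang X w' /\ left_special X w' /\ EL X w' a /\ EL X w' b ->
          w' = w))
  /\
  (* (2) *)
  ((exists N : nat, forall w : seq A, lang X w -> right_special X w -> (N <= size w)%N ->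
      exists a b, consecutive leR a b /\ (forall c, ER X w c <-> c = a \/ c = b))
   /\
   (forall a b : A, consecutive leR a b -> forall n : nat,
      exists w : seq A,
        (size w = n /\ lang X w /\ right_special X w /\ ER X w a /\ ER X w b) /\
        forall w' : seq A,
          size w' = n /\ lang X w' /\ right_special X w' /\ ER X w' a /\ ER X w' b ->
          w' = w)).
Proof.
move=> tL tR mX dX pX; split; first exact: (part1 tL tR mX dX pX).
have [[N hN] hU] := part1 tR tL (minimal_rev mX) (dendric_rev dX) (planar_rev tL tR pX).
split.
  exists N => w lw rs hw.
  have l' : lang (Xr X) (rev w) by apply: (proj2 (lang_rev X _)); rewrite revK.
  have r' : left_special (Xr X) (rev w) by apply: (proj2 (ls_rev X _)); rewrite revK.
  have h' : (N <= size (rev w))%N by rewrite size_rev.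
  have [a [b [c hc]]] := hN (rev w) l' r' h'.
  exists a, b; split => // e; rewrite -hc EL_rev revK; done.
move=> a b cab n; have [w [[s1 [l1 [ls1 [a1 b1]]]] u1]] := hU a b cab n.
exists (rev w); split.
  split; first by rewrite size_rev.
  split; first exact: (proj1 (lang_rev X w) l1).
  split; first exact: (proj1 (ls_rev X w) ls1).
  by split; [exact: (proj1 (EL_rev X w a) a1)|exact: (proj1 (EL_rev X w b) b1)].
move=> w' [s2 [l2 [ls2 [a2 b2]]]].
rewrite -(revK w'); congr rev; apply: u1.
split; first by rewrite size_rev.
split; first by apply: (proj2 (lang_rev X _)); rewrite revK.
split; first by apply: (proj2 (ls_rev X _)); rewrite revK.
by split; apply: (proj2 (EL_rev X _ _)); rewrite revK.
Qed.
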